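(* Consider the problem $\min f(x)$ subject to $g(x)\in\mathcal K$, $x\in\mathcal M$. Let $x^*$ be a feasible point with $M(x^* )\neq\emptyset$ and let $y^*\in M(x^* )$. Then $M(x^* )$ is a singleton if and only if $$\left[Dg(x^* )T_{x^*}\mathcal M\right]^{\perp}\cap\mathcal R_{\mathcal N_{\mathcal K}(g(x^* ))}(y^* )=\{0\}.$$
   Context: $\mathcal M$ is a smooth Riemannian manifold with Riemannian gradient $\operatorname{grad}$; $\mathbb Y$ is a Euclidean space; $f:\mathcal M\to\mathbb R$, $g:\mathcal M\to\mathbb Y$ are twice continuously differentiable; $\mathcal K\subset\mathbb Y$ is a nonempty closed convex set. $Dg(x)$ is the differential of $g$ at $x$, $\mathcal N_{\mathcal K}(u)$ the normal cone of $\mathcal K$ at $u$. The Lagrangian is $L(x;y)=f(x)+\langle y,g(x)\rangle$ and $M(x)=\{y\in\mathbb Y:\operatorname{grad}_xL(x;y)=0,\ y\in\mathcal N_{\mathcal K}(g(x))\}$. For a closed set $\mathcal D$ and $u\in\mathcal D$, the radial cone is $\mathcal R_{\mathcal D}(u)=\{d:\exists t^*>0 \text{ with } u+td\in\mathcal D\ \forall t\in[0,t^*]\}$. Feasible means $g(x^* )\in\mathcal K$. *)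

(* Defs.v *)
(* Pointwise model of the problem  min f(x) s.t. g(x) \in K, x \in M
   at the point xs. *)
From HB Require Import structures.
From mathcomp Require Import all_boot all_order all_algebra.
From mathcomp Require Import all_classical all_reals all_analysis.
Set Implicit Arguments. Unset Strict Implicit. Unset Printing Implicit Defensive.
Import Order.TTheory GRing.Theory Num.Theory numFieldNormedType.Exports.
Local Open Scope ring_scope.
Local Open Scope classical_set_scope.

Section Defs.
Variable R : realType.

Definition edot (m : nat) (a b : 'rV[R]_m) : R := (a *m b^T) 0 0.

Definition is_convex (m : nat) (K : set 'rV[R]_m) : Prop :=
  forall a b, K a -> K b -> forall t : R, 0 <= t -> t <= 1 ->
    K (t *: a + (1 - t) *: b).

Definition normal_cone (m : nat) (K : set 'rV[R]_m) (u : 'rV[R]_m)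
  : set 'rV[R]_m :=
  [set y | forall k, K k -> edot y (k - u) <= 0].

Definition radial_cone (m : nat) (D : set 'rV[R]_m) (u : 'rV[R]_m)
  : set 'rV[R]_m :=
  [set d | exists2 ts : R, 0 < ts &
     forall t : R, 0 <= t -> t <= ts -> D (u + t *: d)].

(* Riemannian gradient on the tangent space T_{xs}M = 'rV[R]_n with metric
   <v,w>_G = (v *m G *m w^T) 0 0 (G symmetric positive definite):
   for a linear form  v |-> (v *m l) 0 0  (l : 'cV_n), its gradient is the
   unique w with <w, v>_G = (v *m l) 0 0 for all v, namely l^T G^{-1}. *)
Definition rgrad (n : nat) (G : 'M[R]_n) (l : 'cV[R]_n) : 'rV[R]_n :=
  l^T *m invmx G.

(* grad_x L(xs; y) where Df(xs)[v] = (v *m df) 0 0 and Dg(xs)[v] = v *m Dg: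
   the differential of x |-> f x + <y, g x> at xs is v |-> v *m (df + Dg *m y^T). *)
Definition gradL (n m : nat) (G : 'M[R]_n) (df : 'cV[R]_n) (Dg : 'M[R]_(n, m))
  (y : 'rV[R]_m) : 'rV[R]_n :=
  rgrad G (df + Dg *m y^T).

Definition multipliers (n m : nat) (G : 'M[R]_n) (df : 'cV[R]_n)
  (Dg : 'M[R]_(n, m)) (K : set 'rV[R]_m) (gx : 'rV[R]_m) : set 'rV[R]_m :=
  [set y | gradL G df Dg y = 0 /\ normal_cone K gx y].

Definition range_perp (n m : nat) (Dg : 'M[R]_(n, m)) : set 'rV[R]_m :=
  [set u | forall v : 'rV[R]_n, edot u (v *m Dg) = 0].

End Defs.

(* Main.v *)
Require Import Defs.
From HB Require Import structures.
From mathcomp Require Import all_boot all_order all_algebra.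
From mathcomp Require Import all_classical all_reals all_analysis.
From mathcomp Require Import lra.
Import Order.TTheory GRing.Theory Num.Theory numFieldNormedType.Exports.
Local Open Scope ring_scope.
Local Open Scope classical_set_scope.

Section Aux.
Variable R : realType.

Lemma edotD m (a b c : 'rV[R]_m) : edot (a + b) c = edot a c + edot b c.
Proof. by rewrite /edot mulmxDl mxE. Qed.

Lemma edotZ m (t : R) (a c : 'rV[R]_m) : edot (t *: a) c = t * edot a c.
Proof. by rewrite /edot -scalemxAl mxE. Qed.

Lemma perpE n m (Dg : 'M[R]_(n, m)) u :
  range_perp Dg u <-> Dg *m u^T = 0.
Proof.
split.
- move=> H; apply: trmx_inj; rewrite trmx_mul trmxK trmx0.
  apply/rowP => j; rewrite mxE.
  have := H (delta_mx 0 j); rewrite /edot trmx_mul trmx_delta mulmxA -colE.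
  by rewrite !mxE.
- move=> H v; rewrite /edot trmx_mul mulmxA.
  have -> : u *m Dg^T = 0 by rewrite -(trmxK (u *m Dg^T)) trmx_mul trmxK H trmx0.
  by rewrite mul0mx mxE.
Qed.

Lemma Gunit n (G : 'M[R]_n)
  (HGpd : forall v : 'rV[R]_n, v != 0 -> 0 < (v *m G *m v^T) 0 0) :
  G \in unitmx.
Proof.
rewrite unitmxE unitfE; apply/negP => /det0P [v Hv HvG].
by have := HGpd v Hv; rewrite HvG mul0mx mxE ltxx.
Qed.

Lemma gradL0 n m (G : 'M[R]_n) df (Dg : 'M[R]_(n, m)) y :
  G \in unitmx -> (gradL G df Dg y = 0 <-> df + Dg *m y^T = 0).
Proof.
move=> GU; rewrite /gradL /rgrad; split.
- move=> H; apply: trmx_inj; rewrite trmx0.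
  by rewrite -(mulmxKV GU (df + Dg *m y^T)^T) H mul0mx.
- by move=> ->; rewrite trmx0 mul0mx.
Qed.

Lemma ncone_cvx m (K : set 'rV[R]_m) u a b t :
  normal_cone K u a -> normal_cone K u b -> 0 <= t -> t <= 1 ->
  normal_cone K u ((1 - t) *: a + t *: b).
Proof.
move=> Ha Hb t0 t1 k Kk; rewrite edotD !edotZ.
have := Ha k Kk; have := Hb k Kk; move: (edot a _) (edot b _) => x y.
nra.
Qed.
End Aux.

Theorem proposition2 (R : realType) (n m : nat)
  (G : 'M[R]_n) (HGsym : G^T = G)
  (HGpd : forall v : 'rV[R]_n, v != 0 -> 0 < (v *m G *m v^T) 0 0)
  (df : 'cV[R]_n) (Dg : 'M[R]_(n, m))
  (K : set 'rV[R]_m) (HK0 : K !=set0) (HKcl : closed K) (HKcvx : is_convex K)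
  (gx : 'rV[R]_m) (Hfeas : K gx)
  (ystar : 'rV[R]_m) (Hystar : multipliers G df Dg K gx ystar) :
  (exists y : 'rV[R]_m, multipliers G df Dg K gx = [set y]) <->
  range_perp Dg `&` radial_cone (normal_cone K gx) ystar = [set 0].
Proof.
have GU := @Gunit R n G HGpd.
case: Hystar => /(@gradL0 R n m G df Dg _ GU) Hg Hn.
have zin : (range_perp Dg `&` radial_cone (normal_cone K gx) ystar) 0.
  split; first by apply/perpE; rewrite trmx0 mulmx0.
  by exists 1 => // t _ _; rewrite scaler0 addr0.
split.
- move=> [y Hy].
  have ey : ystar = y.
    suff : [set y] ystar by [].
    by rewrite -Hy; split => //; apply/(@gradL0 R n m G df Dg _ GU).
  subst y.
  apply/seteqP; split => d /=; last by move=> ->.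
  move=> [/perpE Hd [ts ts0 Hts]].
  have : multipliers G df Dg K gx (ystar + ts *: d).
    split; last by apply: Hts => //; exact: ltW.
    apply/(@gradL0 R n m G df Dg _ GU).
    by rewrite linearD /= linearZ /= mulmxDr -scalemxAr Hd scaler0 addr0.
  rewrite Hy /= => /(congr1 (fun x => x - ystar)).
  rewrite [ystar + _]addrC addrK subrr => /eqP; rewrite scaler_eq0.
  by rewrite gt_eqF //= => /eqP.
- move=> H; exists ystar; apply/seteqP; split => z /=; last first.
    by move=> ->; split => //; apply/(@gradL0 R n m G df Dg _ GU).
  move=> [/(@gradL0 R n m G df Dg _ GU) Hgz Hnz].
  have : (range_perp Dg `&` radial_cone (normal_cone K gx) ystar) (z - ystar).
    split.
      apply/perpE; rewrite linearB /= mulmxBr.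
      have hz : Dg *m z^T = - df by apply/eqP; rewrite -addr_eq0 addrC Hgz.
      have hy : Dg *m ystar^T = - df by apply/eqP; rewrite -addr_eq0 addrC Hg.
      by rewrite hz hy subrr.
    exists 1 => // t t0 t1.
    have -> : ystar + t *: (z - ystar) = (1 - t) *: ystar + t *: z.
      by rewrite scalerBr scalerBl scale1r addrCA addrC.
    exact: ncone_cvx.
  by rewrite H /= => /eqP; rewrite subr_eq0 => /eqP.
Qed.
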